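(* Let $K:[0,\infty)\to(0,\infty)$ be non-increasing with $K(0)=1$, and for $\sigma>0$ let $K_\sigma(x)=K(x/\sigma)$. Let $\mathcal{X}=\{\mathbf{x}_1,\dots,\mathbf{x}_n\}\subset\mathbb{R}^d$ and let $\mathcal{C}_1,\dots,\mathcal{C}_k$ be a partition of $\mathcal{X}$ into nonempty sets. For each $l\in[k]$, suppose $\mathcal{C}_l$ is connected at distance $\delta_l$. Let $\mathbf{U}\in\mathbb{R}^{n\times n}$ have as columns the eigenvectors of the unnormalised Laplacian $\mathbf{L}$ of the graph $\mathcal{G}=(\mathcal{X},K_\sigma)$. Then for each $i,j\in[n]$, $l\in[k]$ with $\mathbf{x}_i,\mathbf{x}_j\in\mathcal{C}_l$, $$\|\mathbf{U}_{i,1:k}-\mathbf{U}_{j,1:k}\|\le \max_{m\in[k]} n^{1.5}k^{0.5}\sqrt{\frac{K_\sigma(d(\mathcal{C}_m,\mathcal{X}\setminus\mathcal{C}_m))}{K_\sigma(\delta_l)}}.$$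
   Context: $[n]=\{1,\dots,n\}$; $\|\cdot\|$ is the Euclidean norm and $d(\mathbf{x},\mathbf{y})=\|\mathbf{x}-\mathbf{y}\|$. For sets $S,U\subset\mathbb{R}^d$, $d(S,U)=\inf_{\mathbf{x}\in S,\mathbf{y}\in U}d(\mathbf{x},\mathbf{y})$, with the convention $d(S,\emptyset)=\infty$. A set $S\subset\mathbb{R}^d$ is connected at distance $\delta$ if there is no partition of $S$ into $S_1,S_2$ with $d(S_1,S_2)>\delta$. The graph $\mathcal{G}=(\mathcal{X},K_\sigma)$ has affinity matrix $\mathbf{A}_{ij}=K_\sigma(\|\mathbf{x}_i-\mathbf{x}_j\|)$ (including $i=j$), degree matrix $\mathbf{D}$ diagonal with $\mathbf{D}_{ii}=\sum_j\mathbf{A}_{ij}$, and unnormalised Laplacian $\mathbf{L}=\mathbf{D}-\mathbf{A}$. ''The eigenvectors'' means an orthonormal eigenbasis arranged as columns so that the corresponding eigenvalues are in nondecreasing order. $\mathbf{U}_{i,1:k}$ denotes the first $k$ entries of row $i$. *)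

(* Defs.v *)
From HB Require Import structures.
From mathcomp Require Import all_boot all_order all_algebra.
From mathcomp Require Import boolp classical_sets reals constructive_ereal.
Set Implicit Arguments. Unset Strict Implicit. Unset Printing Implicit Defensive.
Import Order.TTheory GRing.Theory Num.Theory.
Local Open Scope ring_scope.

Section Defs.
Variable R : realType.

Definition enorm (d : nat) (v : 'rV[R]_d) : R := Num.sqrt (\sum_(t < d) v 0 t ^+ 2).

(* d(S,U) for finite index sets of points x_i; +oo when S or U is empty *)
Definition setdist (n d : nat) (x : 'I_n -> 'rV[R]_d) (S U : {set 'I_n}) : \bar R :=
  \big[Order.min/+oo%E]_(i in S) \big[Order.min/+oo%E]_(j in U) (enorm (x i - x j))%:E.

Definition connected_at (n d : nat) (x : 'I_n -> 'rV[R]_d) (S : {set 'I_n}) (delta : R) : Prop :=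
  forall S1 S2 : {set 'I_n}, S1 :|: S2 = S -> S1 :&: S2 = finset.set0 ->
    S1 != finset.set0 -> S2 != finset.set0 -> ~ (delta%:E < setdist x S1 S2)%E.

Definition Ksig (K : R -> R) (sigma : R) (t : \bar R) : R :=
  match t with
  | r%:E => K (r / sigma)
  | +oo%E => inf [set K s | s in [set s : R | 0 <= s]]
  | -oo%E => 1
  end.

Definition affinity (K : R -> R) (sigma : R) (n d : nat) (x : 'I_n -> 'rV[R]_d) : 'M[R]_n :=
  \matrix_(i, j) K (enorm (x i - x j) / sigma).
Definition degree_mx (n : nat) (A : 'M[R]_n) : 'M[R]_n :=
  diag_mx (\row_i \sum_j A i j).
Definition laplacian (K : R -> R) (sigma : R) (n d : nat) (x : 'I_n -> 'rV[R]_d) : 'M[R]_n :=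
  degree_mx (affinity K sigma x) - affinity K sigma x.

Definition sorted_eigenbasis (n : nat) (L U : 'M[R]_n) : Prop :=
  U^T *m U = 1%:M /\
  exists lam : 'rV[R]_n, L *m U = U *m diag_mx lam /\
    (forall a b : 'I_n, (a <= b)%N -> lam 0 a <= lam 0 b).

Definition rowdist_first (n k : nat) (U : 'M[R]_n) (i j : 'I_n) : R :=
  Num.sqrt (\sum_(t < n | (t < k)%N) (U i t - U j t) ^+ 2).

End Defs.

(* Main.v *)
Require Import Defs.
From HB Require Import structures.
From mathcomp Require Import all_boot all_order all_algebra.
From mathcomp Require Import boolp classical_sets reals constructive_ereal.
From mathcomp Require Import ring lra zify.
Import Order.TTheory GRing.Theory Num.Theory.
Local Open Scope ring_scope.

Section Helpers.
Variable R : realType.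

Lemma path_sq (T : eqType) (e : rel T) (v : T -> R) (w : T -> T -> R) (kd : R) :
  0 < kd -> (forall a b, 0 <= w a b) ->
  (forall a b, e a b -> (v b - v a) ^+ 2 * kd <= w a b) ->
  forall p j, path e j p ->
  (v (last j p) - v j) ^+ 2 * kd <= (size p)%:R * \sum_(q <- zip (j :: p) p) w q.1 q.2.
Proof.
move=> kd0 w0 hw; elim=> [|b p IH] j /=.
  by move=> _; rewrite subrr expr0n /= mul0r mul0r.
case/andP=> ejb pb.
have := IH b pb; rewrite big_cons /=.
have hg := hw _ _ ejb.
set D := v (last b p) - v b; set g := v b - v j.
set TT := \sum_(q <- _) _; set W := w j b; set m := (size p)%:R.
have T0 : 0 <= TT by rewrite /TT; apply: sumr_ge0 => q _; apply: w0.
have W0 : 0 <= W by apply: w0.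
have -> : v (last b p) - v j = D + g by rewrite /D /g; ring.
move=> hD.
case: p IH pb @D @TT @m hD T0 => [|b' p'] IH pb D TT m hD T0.
  rewrite /D /= subrr add0r /TT big_nil addr0 mul1r; exact: hg.
have m0 : 0 < m by rewrite /m ltr0n.
have hg' : g ^+ 2 * kd <= W := hg.
suff h2 : 2 * D * g * kd <= m * W + TT.
  rewrite -natr1 -/m.
  have -> : (D + g) ^+ 2 * kd = D ^+ 2 * kd + g ^+ 2 * kd + 2 * D * g * kd by ring.
  have e1 : (m + 1) * (W + TT) = m * W + W + m * TT + TT by ring.
  rewrite e1; clearbody D g m W TT; lra.
rewrite -(ler_pM2l m0).
have : 0 <= (m * g - D) ^+ 2 * kd by apply: mulr_ge0 => //; [apply: sqr_ge0 | apply: ltW].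
have e2 : (m * g - D) ^+ 2 * kd = m * m * (g ^+ 2 * kd) - m * (2 * D * g * kd) + D ^+ 2 * kd by ring.
rewrite e2; clearbody D g m W TT.
have h3 : m * m * (g ^+ 2 * kd) <= m * m * W by rewrite ler_pM2l ?mulr_gt0.
rewrite mulrDr mulrA; lra.
Qed.

Lemma sum_zip_le (n : nat) (F : 'I_n -> 'I_n -> R) :
  (forall a b, 0 <= F a b) ->
  forall p j, uniq (j :: p) ->
  \sum_(q <- zip (j :: p) p) F q.1 q.2 <= \sum_a \sum_b F a b.
Proof.
move=> F0 p j u.
have h : \sum_(q <- zip (j :: p) p) F q.1 q.2 <= \sum_(a <- j :: p) \sum_b F a b.
  elim: p j {u} => [|b p IH] j /=.
    by rewrite big_nil big_cons big_nil addr0; apply: sumr_ge0 => *.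
  rewrite !big_cons; apply: lerD; first by rewrite (bigD1 b) //= lerDl; apply: sumr_ge0.
  by have := IH b; rewrite big_cons.
apply: (le_trans h); rewrite big_uniq // [X in _ <= X](bigID (fun a => a \in j :: p)) /=.
by rewrite lerDl; apply: sumr_ge0 => a _; apply: sumr_ge0.
Qed.


Lemma quadE (n : nat) (A : 'M[R]_n) (v : 'I_n -> R) :
  \sum_a \sum_b v a * (degree_mx A - A) a b * v b =
  \sum_a \sum_b A a b * (v a ^+ 2 - v a * v b).
Proof.
apply: eq_bigr => a _.
have hL b : (degree_mx A - A) a b = (if a == b then \sum_c A a c else 0) - A a b.
  by rewrite !mxE mulrb.
under eq_bigr do rewrite hL mulrBr mulrBl.
set D := \sum_c A a c.
have hd : \sum_b v a * (if a == b then D else 0) * v b = v a * D * v a.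
  rewrite (bigD1 a) //= eqxx big1 ?addr0 // => b nba.
  by rewrite eq_sym (negPf nba) mulr0 mul0r.
rewrite sumrB hd.
under [in RHS]eq_bigr do rewrite mulrBr.
rewrite sumrB -mulr_suml; congr (_ - _); first by rewrite /D; ring.
by apply: eq_bigr => b _; ring.
Qed.

Lemma quad_sym (n : nat) (A : 'M[R]_n) (v : 'I_n -> R) :
  (forall a b, A a b = A b a) ->
  \sum_a \sum_b A a b * (v b - v a) ^+ 2 =
  2 * \sum_a \sum_b A a b * (v a ^+ 2 - v a * v b).
Proof.
move=> As.
have -> : \sum_a \sum_b A a b * (v b - v a) ^+ 2 =
  \sum_a \sum_b A a b * (v a ^+ 2 - v a * v b) +
  \sum_a \sum_b A a b * (v b ^+ 2 - v a * v b).
  rewrite -big_split; apply: eq_bigr => a _; rewrite -big_split; apply: eq_bigr => b _ /=; ring.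
rewrite [X in _ + X]exchange_big /=.
have -> : \sum_b \sum_a A a b * (v b ^+ 2 - v a * v b) =
   \sum_a \sum_b A a b * (v a ^+ 2 - v a * v b).
  apply: eq_bigr => a _; apply: eq_bigr => b _; rewrite As; ring.
ring.
Qed.

Lemma mx_quad (n : nat) (M : 'M[R]_n) (y : 'rV[R]_n) :
  (y *m M *m y^T) 0 0 = \sum_a \sum_b y 0 a * M a b * y 0 b.
Proof.
rewrite mxE; under eq_bigr do rewrite !mxE big_distrl /=.
rewrite exchange_big /=; apply: eq_bigr => a _; apply: eq_bigr => b _ //.
Qed.

Lemma mx_quad_col (n : nat) (M U : 'M[R]_n) (t : 'I_n) :
  (U^T *m M *m U) t t = \sum_a \sum_b U a t * M a b * U b t.
Proof.
rewrite mxE; under eq_bigr do rewrite !mxE big_distrl /=.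
rewrite exchange_big /=; apply: eq_bigr => a _; apply: eq_bigr => b _ //.
by rewrite mxE.
Qed.


Lemma conn_path (n d : nat) (x : 'I_n -> 'rV[R]_d) (C : {set 'I_n}) (dl : R)
  (e : rel 'I_n) : connected_at x C dl ->
  (forall a b, a \in C -> b \in C -> enorm (x a - x b) <= dl -> e a b) ->
  forall i j, i \in C -> j \in C -> connect e j i.
Proof.
move=> hc he i j iC jC; apply/negPn/negP => nc.
pose S1 := [set a in C | connect e j a].
pose S2 := [set a in C | ~~ connect e j a].
apply: (hc S1 S2).
- by apply/setP => a; rewrite !inE; case: (a \in C); case: connect.
- by apply/setP => a; rewrite !inE; case: (a \in C); case: connect.
- by apply/set0Pn; exists j; rewrite inE jC connect0.
- by apply/set0Pn; exists i; rewrite inE iC nc.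
rewrite /setdist.
apply: (big_ind (fun v => (dl%:E < v)%E)); first exact: ltry.
- by move=> u w hu hw; rewrite lt_min hu hw.
move=> a; rewrite inE => /andP [aC ja].
apply: (big_ind (fun v => (dl%:E < v)%E)); first exact: ltry.
- by move=> u w hu hw; rewrite lt_min hu hw.
move=> b; rewrite inE => /andP [bC njb].
rewrite lte_fin ltNge; apply/negP => hle; move/negP: njb; apply.
exact: connect_trans ja (connect1 (he _ _ aC bC hle)).
Qed.

End Helpers.

Lemma enormN (R : realType) (d : nat) (v : 'rV[R]_d) : enorm (- v) = enorm v.
Proof. by rewrite /enorm; congr Num.sqrt; apply: eq_bigr => t _; rewrite mxE sqrrN. Qed.

Theorem lemma1 (R : realType) (K : R -> R)
  (K_pos : forall t, 0 <= t -> 0 < K t)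
  (K_noninc : forall s t, 0 <= s -> s <= t -> K t <= K s)
  (K0 : K 0 = 1)
  (sigma : R) (sigma_pos : 0 < sigma)
  (n d k : nat) (x : 'I_n -> 'rV[R]_d) (x_inj : injective x)
  (c : 'I_n -> 'I_k) (c_surj : forall l : 'I_k, exists i : 'I_n, c i = l)
  (delta : 'I_k -> R) (delta_ge0 : forall l, 0 <= delta l)
  (Hconn : forall l : 'I_k, connected_at x [set i | c i == l] (delta l))
  (U : 'M[R]_n) (HU : sorted_eigenbasis (laplacian K sigma x) U) :
  forall (i j : 'I_n) (l : 'I_k), c i = l -> c j = l ->
    rowdist_first k U i j <=
    \big[Num.max/0]_(m < k)
      (n%:R * Num.sqrt n%:R * Num.sqrt k%:R *
       Num.sqrt (Ksig K sigma (setdist x [set t | c t == m] [set t | c t != m])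
                 / Ksig K sigma (delta l)%:E)).
Proof.
move=> i j l ci cj.
set A := affinity K sigma x.
have LE : laplacian K sigma x = degree_mx A - A by [].
case: HU => UU [lam [LU lsort]].
rewrite LE in LU.
have AE a b : A a b = K (enorm (x a - x b) / sigma) by rewrite /A /affinity mxE.
have en0 (a b : 'I_n) : 0 <= enorm (x a - x b) / sigma.
  by apply: divr_ge0; [apply: sqrtr_ge0 | apply: ltW].
have As a b : A a b = A b a by rewrite !AE -enormN opprB.
have A0 a b : 0 <= A a b by rewrite AE; apply: ltW; apply: K_pos.
set Kd := K (delta l / sigma).
have dl0 : 0 <= delta l / sigma by apply: divr_ge0 => //; apply: ltW.
have Kd0 : 0 < Kd by apply: K_pos.
set Km := fun m : 'I_k => Ksig K sigma (setdist x [set t | c t == m] [set t | c t != m]).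
set M := \big[Num.max/0]_(m < k) Km m.
have hM0 : 0 <= M.
  by rewrite /M; apply: bigmax_ge_id.
have hMm m : Km m <= M by rewrite /M; apply: le_bigmax.
have hAcross a b : c a != c b -> A a b <= M.
  move=> cab; apply: le_trans (hMm (c a)); rewrite /Km /=.
  set S := setdist _ _ _.
  have hS : (S <= (enorm (x a - x b))%:E)%E.
    rewrite /S /setdist.
    apply: le_trans (bigmin_le_cond _ _ _) _; first by rewrite inE.
    apply: bigmin_le_cond; by rewrite inE eq_sym.
  have hS0 : (0 <= S)%E.
    rewrite /S /setdist; apply: (big_ind (fun v => (0 <= v)%E)); first exact: leey.
    - by move=> u w hu hw; rewrite le_min hu hw.
    move=> a' _; apply: (big_ind (fun v => (0 <= v)%E)); first exact: leey.
    - by move=> u w hu hw; rewrite le_min hu hw.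
    by move=> b' _; rewrite lee_fin sqrtr_ge0.
  move: hS hS0; case: S => [r| |] //= hS hS0.
  rewrite AE; apply: K_noninc.
    by apply: divr_ge0; [rewrite -lee_fin | apply: ltW].
  by apply: ler_wpM2r; [rewrite invr_ge0 ltW | rewrite -lee_fin].
have k0 : (0 < k)%N := leq_ltn_trans (leq0n _) (ltn_ord (c i)).
have hkn : (k <= n)%N.
  have h1 : (#|[set: 'I_k]| <= #|[set c a | a in 'I_n]|)%N.
    apply: subset_leq_card; apply/fintype.subsetP => m _.
    have [a ha] := c_surj m; apply/imsetP; exists a => //.
  by move: (leq_trans h1 (leq_imset_card _ _)); rewrite cardsT !card_ord.
have hk1 : (k.-1 < n)%N by rewrite prednK.
have hk1' : (k.-1 <= n)%N by apply: ltnW.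
set kk : 'I_n := Ordinal hk1.
(* existence of a cluster-constant vector orthogonal to the first k-1 eigenvectors *)
set B : 'M[R]_(k, n) := \matrix_(m, a) ((c a == m)%:R).
pose G : 'M[R]_(k, n) := B *m U *m pid_mx k.-1.
have rG : (\rank G <= k.-1)%N.
  by apply: leq_trans (mxrankM_maxr _ _) _; rewrite rank_pid_mx.
have nfree : kermx G != 0.
  rewrite kermx_eq0 /row_free; apply/negP => /eqP hr.
  by move: rG; rewrite hr leqNgt ltn_predL k0.
have [av avsub avnz] := rowV0Pn nfree.
have avG : av *m G = 0 by apply/sub_kermxP.
set y := av *m B.
have yE a : y 0 a = av 0 (c a).
  rewrite /y mxE (bigD1 (c a)) //= mxE eqxx mulr1 big1 ?addr0 // => m /negPf.
  by rewrite mxE eq_sym => ->; rewrite mulr0.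
have [m0 hm0] : exists m, av 0 m != 0.
  case: (pickP (fun m => av 0 m != 0)) => [m hm | h]; first by exists m.
  exfalso; move/negP: avnz; apply; apply/eqP/rowP => m.
  by move: (h m) => /negbFE /eqP ->; rewrite mxE.
have [a0 ha0] := c_surj m0.
set z := y *m U.
have zpid : z *m (pid_mx k.-1 : 'M[R]_n) = 0.
  by move: avG; rewrite /z /y /G !mulmxA.
have z0 (t : 'I_n) : (t < k.-1)%N -> z 0 t = 0.
  move=> ht.
  have hp : (z *m (pid_mx k.-1 : 'M[R]_n)) 0 t = z 0 t.
    rewrite [LHS]mxE (bigD1 t) //= big1 ?addr0.
      by rewrite [pid_mx _ t t]mxE eqxx ht mulr1.
    move=> s hs; rewrite [pid_mx _ s t]mxE.
    have -> : (s == t :> nat) = false by apply/negbTE.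
    by rewrite mulr0.
  by rewrite -hp zpid mxE.
have UUt : U *m U^T = 1%:M by apply: mulmx1C.
have yz : y = z *m U^T by rewrite /z -mulmxA UUt mulmx1.
have ULU : U^T *m (degree_mx A - A) *m U = diag_mx lam.
  by rewrite -mulmxA LU mulmxA UU mul1mx.
set S := \sum_t z 0 t ^+ 2.
have SE : \sum_a y 0 a ^+ 2 = S.
  have : (y *m y^T) 0 0 = (z *m z^T) 0 0.
    by rewrite yz trmx_mul trmxK mulmxA -(mulmxA z) UU mulmx1.
  rewrite !mxE => h; rewrite /S; transitivity (\sum_a y 0 a * y^T a 0).
    by apply: eq_bigr => a _; rewrite [y^T a 0]mxE expr2.
  by rewrite h; apply: eq_bigr => t _; rewrite [z^T t 0]mxE expr2.
have S0 : 0 < S.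
  rewrite -SE (bigD1 a0) //=.
  have h1 : 0 < y 0 a0 ^+ 2 by rewrite lt_def sqrf_eq0 sqr_ge0 andbT yE ha0.
  apply: (lt_le_trans h1); rewrite lerDl.
  by apply: sumr_ge0 => *; apply: sqr_ge0.
clearbody z y.
set Q := (y *m (degree_mx A - A) *m y^T) 0 0.
have hQ1 : Q = \sum_t z 0 t * lam 0 t * z 0 t.
  rewrite /Q.
  have -> : y *m (degree_mx A - A) *m y^T = z *m (U^T *m (degree_mx A - A) *m U) *m z^T.
    by rewrite yz trmx_mul trmxK !mulmxA.
  rewrite ULU mul_mx_diag mxE; apply: eq_bigr => t _; rewrite !mxE //.
have hlow : lam 0 kk * S <= Q.
  rewrite hQ1 /S mulr_sumr; apply: ler_sum => t _.
  case: (ltnP t k.-1) => ht.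
    by rewrite z0 // expr0n /= !(mulr0, mul0r).
  have hl := lsort kk t ht.
  have -> : z 0 t * lam 0 t * z 0 t = lam 0 t * z 0 t ^+ 2 by ring.
  by apply: ler_wpM2r => //; apply: sqr_ge0.
have term a b : 2 * (A a b * (y 0 a ^+ 2 - y 0 a * y 0 b)) <= M * (3 * y 0 a ^+ 2 + y 0 b ^+ 2).
  have hA := A0 a b.
  case: (c a =P c b) => h.
    rewrite !yE h subrr mulr0 mulr0; apply: mulr_ge0 => //.
    by apply: addr_ge0; [apply: mulr_ge0 => //; apply: sqr_ge0 | apply: sqr_ge0].
  have hAM := hAcross a b (introN eqP h).
  have hpos : 0 <= 3 * y 0 a ^+ 2 + y 0 b ^+ 2.
    by apply: addr_ge0; [apply: mulr_ge0 => //; apply: sqr_ge0 | apply: sqr_ge0].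
  apply: (le_trans (_ : _ <= A a b * (3 * y 0 a ^+ 2 + y 0 b ^+ 2))).
    rewrite -subr_ge0.
    have -> : A a b * (3 * y 0 a ^+ 2 + y 0 b ^+ 2) - 2 * (A a b * (y 0 a ^+ 2 - y 0 a * y 0 b))
        = A a b * (y 0 a + y 0 b) ^+ 2 by ring.
    by apply: mulr_ge0 => //; apply: sqr_ge0.
  by apply: ler_wpM2r.
have hsum : \sum_a \sum_b M * (3 * y 0 a ^+ 2 + y 0 b ^+ 2) = 4 * n%:R * M * S.
  transitivity (\sum_a (M * (3 * y 0 a ^+ 2) *+ n + M * S)).
    apply: eq_bigr => a _; under eq_bigr do rewrite mulrDr.
    by rewrite big_split /= sumr_const card_ord -mulr_sumr SE.
  rewrite big_split /= sumr_const card_ord sumrMnl -mulr_sumr -mulr_sumr SE.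
  rewrite -[(M * (3 * S)) *+ n]mulr_natr -[(M * S) *+ n]mulr_natr; ring.
have hup : Q <= 2 * n%:R * M * S.
  rewrite /Q mx_quad (@quadE R n A (y 0)).
  rewrite -(ler_pM2l (_ : 0 < 2 :> R)) //.
  apply: (le_trans (_ : _ <= \sum_a \sum_b M * (3 * y 0 a ^+ 2 + y 0 b ^+ 2))).
    rewrite mulr_sumr; apply: ler_sum => a _; rewrite mulr_sumr; apply: ler_sum => b _.
    exact: term.
  by rewrite hsum; have -> : 2 * (2 * n%:R * M * S) = 4 * n%:R * M * S by ring.
have lamb : lam 0 kk <= 2 * n%:R * M.
  by rewrite -(ler_pM2r S0); apply: le_trans hlow hup.
have w0 (t : 'I_n) a b : 0 <= A a b * (U b t - U a t) ^+ 2.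
  by apply: mulr_ge0; [apply: A0 | apply: sqr_ge0].
pose e : rel 'I_n := fun a b => [&& c a == l, c b == l & enorm (x a - x b) <= delta l].
have hc : connect e j i.
  apply: (@conn_path R n d x [set a | c a == l] (delta l) e (Hconn l)).
  - by move=> a b; rewrite !inE => ha hb hab; rewrite /e ha hb hab.
  - by rewrite inE ci.
  - by rewrite inE cj.
case/connectP: hc => p0 pth0 hi.
move: hi; case: (shortenP pth0) => p pth uq _ hi.
have sp : (size p <= n.-1)%N.
  have h1 : (size (j :: p) <= n)%N.
    by rewrite -(card_uniqP uq); apply: leq_trans (max_card _) _; rewrite card_ord.
  by rewrite -ltnS prednK // (leq_ltn_trans (leq0n _) h1).
have colb (t : 'I_n) : (t < k)%N -> (U i t - U j t) ^+ 2 * Kd <= n.-1%:R * (2 * (2 * n%:R * M)).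
  move=> tk.
  have hlt : lam 0 t = \sum_a \sum_b A a b * ((fun a => U a t) a ^+ 2 - (fun a => U a t) a * (fun a => U a t) b).
    have h := congr1 (fun N : 'M[R]_n => N t t) ULU.
    rewrite /= mx_quad_col (@quadE R n A (fun a => U a t)) mxE eqxx mulr1n in h.
    by rewrite -h.
  have hsym : \sum_a \sum_b A a b * (U b t - U a t) ^+ 2 = 2 * lam 0 t.
    by rewrite hlt -(@quad_sym R n A (fun a => U a t)).
  have hle : lam 0 t <= lam 0 kk by apply: lsort => /=; rewrite -ltnS prednK.
  have hw a b : e a b -> (U b t - U a t) ^+ 2 * Kd <= A a b * (U b t - U a t) ^+ 2.
    case/and3P => _ _ hab; rewrite mulrC; apply: ler_wpM2r; first by apply: sqr_ge0.
    rewrite AE; apply: K_noninc => //.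
    by apply: ler_wpM2r => //; rewrite invr_ge0 ltW.
  have hps := @path_sq R _ e (fun a => U a t) (fun a b => A a b * (U b t - U a t) ^+ 2) Kd Kd0 (w0 t) hw p j pth.
  rewrite /= -hi in hps.
  have hz := @sum_zip_le R n (fun a b => A a b * (U b t - U a t) ^+ 2) (w0 t) p j uq.
  rewrite /= hsym in hz.
  have l0 : 0 <= 2 * lam 0 t by rewrite -hsym; apply: sumr_ge0 => a _; apply: sumr_ge0 => b _; apply: w0.
  apply: (le_trans hps).
  apply: (le_trans (ler_wpM2l (ler0n _ _) hz)).
  apply: (le_trans (ler_wpM2r l0 (_ : (size p)%:R <= n.-1%:R))); first by rewrite ler_nat.
  apply: ler_wpM2l; first by apply: ler0n.
  by apply: ler_wpM2l => //; apply: le_trans hle lamb.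
rewrite /rowdist_first.
set C := n.-1%:R * (2 * (2 * n%:R * M)) / Kd.
have hsumk : \sum_(t < n | (t < k)%N) (U i t - U j t) ^+ 2 <= k%:R * C.
  apply: (le_trans (_ : _ <= \sum_(t < n | (t < k)%N) C)).
    by apply: ler_sum => t tk; rewrite ler_pdivlMr //; exact: colb.
  by rewrite -(big_ord_widen _ (fun _ => C) hkn) sumr_const card_ord mulr_natl.
set Nn := n%:R; set q := M / Kd.
have q0 : 0 <= q by apply: divr_ge0 => //; apply: ltW.
have hnat : (4%:R : R) * n.-1%:R <= Nn * Nn.
  have [n' hn'] : exists n', n = n'.+1.
    by exists n.-1; rewrite prednK // (leq_ltn_trans (leq0n _) (ltn_ord i)).
  rewrite /Nn hn' /= -natr1.
  have : 0 <= (n'%:R - 1 : R) ^+ 2 by apply: sqr_ge0.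
  nra.
have step1 : \sum_(t < n | (t < k)%N) (U i t - U j t) ^+ 2 <= (Nn ^+ 2 * Nn * k%:R) * q.
  apply: (le_trans hsumk).
  have -> : k%:R * C = ((4%:R : R) * n.-1%:R) * (Nn * k%:R * q) by rewrite /C /q /Nn; ring.
  have -> : Nn ^+ 2 * Nn * k%:R * q = (Nn * Nn) * (Nn * k%:R * q) by ring.
  apply: ler_wpM2r => //; apply: mulr_ge0 => //; apply: mulr_ge0; apply: ler0n.
have step2 : Num.sqrt ((Nn ^+ 2 * Nn * k%:R) * q) = Nn * Num.sqrt Nn * Num.sqrt k%:R * Num.sqrt q.
  rewrite sqrtrM; last by rewrite /Nn !mulr_ge0 ?ler0n ?sqr_ge0.
  rewrite sqrtrM; last by rewrite /Nn !mulr_ge0 ?ler0n ?sqr_ge0.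
  rewrite sqrtrM; last by apply: sqr_ge0.
  by rewrite sqrtr_sqr ger0_norm // /Nn ler0n.
apply: (le_trans (_ : _ <= Num.sqrt ((Nn ^+ 2 * Nn * k%:R) * q))).
  rewrite ler_sqrt //; apply: mulr_ge0 => //; rewrite /Nn !mulr_ge0 ?ler0n ?sqr_ge0 //.
rewrite step2 /q.
set Y := \big[Num.max/0]_(m < k) _.
have Yge m : Nn * Num.sqrt Nn * Num.sqrt k%:R * Num.sqrt (Km m / Kd) <= Y.
  exact: (le_bigmax _ (fun m => Nn * Num.sqrt Nn * Num.sqrt k%:R * Num.sqrt (Km m / Kd)) m).
have Y0 : 0 <= Y.
  apply: le_trans (Yge (c i)).
  by rewrite !mulr_ge0 ?sqrtr_ge0 // /Nn ler0n.
rewrite /M.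
apply: (big_ind (fun v => Nn * Num.sqrt Nn * Num.sqrt k%:R * Num.sqrt (v / Kd) <= Y)).
- by rewrite mul0r sqrtr0 mulr0.
- move=> u w /= hu hw.
  by case: (leP u w) => h.
- by move=> m _; apply: Yge.
Qed.
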